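(* If $f$ satisfies the rate conditions of order $0$ and $z_1,z_2\in D$ satisfy $z_1\in J_u(z_2,1/L)$, then $\|\pi_x(f(z_1)-f(z_2))\|\ge\xi_{u,1,P}\|\pi_x(z_1-z_2)\|$.
   Context: $c,u,s$ positive integers, $\Lambda=(\mathbb{R}/\mathbb{Z})^c$, $R_\Lambda=\tfrac12$; points are ''in the same chart'' if their $\lambda$-components have lifts to $\mathbb{R}^c$ at distance $\le R_\Lambda$; differences, norms, cones and derivatives are computed in such lifts. $\overline B_n(R)$ closed ball at $0$; Euclidean norms. $0<R<R_\Lambda/2$, $D=\Lambda\times\overline B_u(R)\times\overline B_s(R)$, $z=(\lambda,x,y)$, projections $\pi_\lambda,\pi_x,\pi_y,\pi_{(\lambda,y)}$; $f:D\to\Lambda\times\mathbb{R}^u\times\mathbb{R}^s$ is $C^1$, $f=(f_\lambda,f_x,f_y)$. $m(A)=\max\{c:\|Av\|\ge c\|v\|\}$, $m(\mathbf A)=\inf_{A\in\mathbf A}m(A)$; $[\partial g/\partial w(U)]$ = set of matrices with $(i,j)$ entry in $[\inf_U\partial g_i/\partial w_j,\sup_U\partial g_i/\partial w_j]$; $P(z)=\{w\in D:\|\pi_\lambda w-\pi_\lambda z\|\le R_\Lambda/2\}$. Fix $L\in(2R/R_\Lambda,1)$. $\mu_{s,1}=\sup_D\{\|\partial_yf_y\|+\frac1L\|\partial_{(\lambda,x)}f_y\|\}$, $\xi_{u,1,P}=\inf_{z\in D}m[\partial_xf_x(P(z))]-\frac1L\sup_D\|\partial_{(\lambda,y)}f_x\|$,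 $\mu_{cs,1}=\sup_D\{\|\partial_{(\lambda,y)}f_{(\lambda,y)}\|+L\|\partial_xf_{(\lambda,y)}\|\}$, $\xi_{cu,1,P}=\inf_{z\in D}m[\partial_{(\lambda,x)}f_{(\lambda,x)}(P(z))]-L\sup_D\|\partial_yf_{(\lambda,x)}\|$. Rate conditions of order $0$: $\mu_{s,1}<1<\xi_{u,1,P}$, $\mu_{cs,1}<\xi_{u,1,P}$, $\mu_{s,1}<\xi_{cu,1,P}$. $J_u(z,M)=\{(\lambda,x,y):\|(\lambda,y)-\pi_{(\lambda,y)}z\|\le M\|x-\pi_xz\|\}$. *)

(* Defs.v *)
From mathcomp Require Import all_boot all_order all_algebra.
From mathcomp Require Import boolp classical_sets reals.

Set Implicit Arguments.
Unset Strict Implicit.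
Unset Printing Implicit Defensive.

Import Order.TTheory GRing.Theory Num.Theory.
Local Open Scope classical_set_scope.
Local Open Scope ring_scope.

Section Defs.
Variable R : realType.

Definition enorm n (v : 'cV[R]_n) : R := Num.sqrt (\sum_i (v i ord0) ^+ 2).

Definition opnorm m n (A : 'M[R]_(m, n)) : R :=
  sup [set r | exists v : 'cV[R]_n, enorm v <= 1 /\ r = enorm (A *m v)].

Definition mlow m n (A : 'M[R]_(m, n)) : R :=
  sup [set c | forall v : 'cV[R]_n, c * enorm v <= enorm (A *m v)].

Definition mlow_set m n (AA : set 'M[R]_(m, n)) : R :=
  inf [set r | exists2 A, AA A & r = mlow A].

Definition ihull (T : Type) m n (G : T -> 'M[R]_(m, n)) (U : set T)
  : set 'M[R]_(m, n) :=
  [set A | forall i j,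
     inf [set r | exists2 w, U w & r = G w i j] <= A i j /\
     A i j <= sup [set r | exists2 w, U w & r = G w i j]].

(* Lifted points z = (lambda, x, y) in R^c x R^u x R^s
   (lambda is a lift to R^c of a lpoint of Lambda = (R/Z)^c). *)
Definition lpoint c u s : Type := ('cV[R]_c * 'cV[R]_u * 'cV[R]_s)%type.

Definition plam c u s (z : lpoint c u s) : 'cV[R]_c := z.1.1.
Definition px c u s (z : lpoint c u s) : 'cV[R]_u := z.1.2.
Definition py c u s (z : lpoint c u s) : 'cV[R]_s := z.2.

Definition psub c u s (z w : lpoint c u s) : lpoint c u s :=
  (plam z - plam w, px z - px w, py z - py w).

Definition pnorm c u s (z : lpoint c u s) : R :=
  Num.sqrt (enorm (plam z) ^+ 2 + enorm (px z) ^+ 2 + enorm (py z) ^+ 2).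

Definition intv c (k : 'cV[int]_c) : 'cV[R]_c := map_mx (fun n : int => n%:~R) k.

Definition Dom c u s (Rr : R) : set (lpoint c u s) :=
  [set z | enorm (px z) <= Rr /\ enorm (py z) <= Rr].

(* P(z) = { w in D : |pi_lambda w - pi_lambda z| <= R_Lambda/2 = 1/4 },
   in lifted coordinates (the derivative of a lift is Z^c-periodic in lambda). *)
Definition Pset c u s (Rr : R) (z : lpoint c u s) : set (lpoint c u s) :=
  [set w | Dom Rr w /\ enorm (plam w - plam z) <= 4^-1].

(* derivative of a lift, as its nine blocks; d_ij = d f_i / d w_j *)
Record deriv9 c u s := Deriv9 {
  dll : 'M[R]_(c, c); dlx : 'M[R]_(c, u); dly : 'M[R]_(c, s);
  dxl : 'M[R]_(u, c); dxx : 'M[R]_(u, u); dxy : 'M[R]_(u, s);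
  dyl : 'M[R]_(s, c); dyx : 'M[R]_(s, u); dyy : 'M[R]_(s, s) }.

Definition dapply c u s (d : deriv9 c u s) (v : lpoint c u s) : lpoint c u s :=
  (dll d *m plam v + dlx d *m px v + dly d *m py v,
   dxl d *m plam v + dxx d *m px v + dxy d *m py v,
   dyl d *m plam v + dyx d *m px v + dyy d *m py v).

Definition mxdist m n (A B : 'M[R]_(m, n)) : R := \sum_i \sum_j `|A i j - B i j|.

Definition d9dist c u s (d e : deriv9 c u s) : R :=
  mxdist (dll d) (dll e) + mxdist (dlx d) (dlx e) + mxdist (dly d) (dly e) +
  mxdist (dxl d) (dxl e) + mxdist (dxx d) (dxx e) + mxdist (dxy d) (dxy e) +
  mxdist (dyl d) (dyl e) + mxdist (dyx d) (dyx e) + mxdist (dyy d) (dyy e).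

Definition is_lift c u s (Rr : R) (F : lpoint c u s -> lpoint c u s) : Prop :=
  forall z, Dom Rr z -> forall k : 'cV[int]_c,
    let zk := (plam z + intv k, px z, py z) in
    px (F zk) = px (F z) /\ py (F zk) = py (F z) /\
    exists k' : 'cV[int]_c, plam (F zk) = plam (F z) + intv k'.

Definition is_C1_with c u s (Rr : R) (F : lpoint c u s -> lpoint c u s)
    (DF : lpoint c u s -> deriv9 c u s) : Prop :=
  (forall z, Dom Rr z -> forall eps : R, 0 < eps -> exists2 del : R, 0 < del &
     forall w, Dom Rr w -> pnorm (psub w z) < del ->
       pnorm (psub (psub (F w) (F z)) (dapply (DF z) (psub w z)))
         <= eps * pnorm (psub w z)) /\
  (forall z, Dom Rr z -> forall eps : R, 0 < eps -> exists2 del : R, 0 < del &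
     forall w, Dom Rr w -> pnorm (psub w z) < del -> d9dist (DF w) (DF z) < eps).

Definition d_y_fy c u s (d : deriv9 c u s) : 'M[R]_(s, s) := dyy d.
Definition d_lx_fy c u s (d : deriv9 c u s) : 'M[R]_(s, c + u) := row_mx (dyl d) (dyx d).
Definition d_x_fx c u s (d : deriv9 c u s) : 'M[R]_(u, u) := dxx d.
Definition d_ly_fx c u s (d : deriv9 c u s) : 'M[R]_(u, c + s) := row_mx (dxl d) (dxy d).
Definition d_ly_fly c u s (d : deriv9 c u s) : 'M[R]_(c + s, c + s) :=
  block_mx (dll d) (dly d) (dyl d) (dyy d).
Definition d_x_fly c u s (d : deriv9 c u s) : 'M[R]_(c + s, u) := col_mx (dlx d) (dyx d).
Definition d_lx_flx c u s (d : deriv9 c u s) : 'M[R]_(c + u, c + u) :=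
  block_mx (dll d) (dlx d) (dxl d) (dxx d).
Definition d_y_flx c u s (d : deriv9 c u s) : 'M[R]_(c + u, s) := col_mx (dly d) (dxy d).

Definition sup_D c u s (Rr : R) (g : lpoint c u s -> R) : R :=
  sup [set r | exists2 z, Dom Rr z & r = g z].
Definition inf_D c u s (Rr : R) (g : lpoint c u s -> R) : R :=
  inf [set r | exists2 z, Dom Rr z & r = g z].

Definition mu_s1 c u s (Rr L : R) (DF : lpoint c u s -> deriv9 c u s) : R :=
  sup_D Rr (fun z => opnorm (d_y_fy (DF z)) + L^-1 * opnorm (d_lx_fy (DF z))).

Definition xi_u1P c u s (Rr L : R) (DF : lpoint c u s -> deriv9 c u s) : R :=
  inf_D Rr (fun z => mlow_set (ihull (fun w => d_x_fx (DF w)) (Pset Rr z)))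
  - L^-1 * sup_D Rr (fun z => opnorm (d_ly_fx (DF z))).

Definition mu_cs1 c u s (Rr L : R) (DF : lpoint c u s -> deriv9 c u s) : R :=
  sup_D Rr (fun z => opnorm (d_ly_fly (DF z)) + L * opnorm (d_x_fly (DF z))).

Definition xi_cu1P c u s (Rr L : R) (DF : lpoint c u s -> deriv9 c u s) : R :=
  inf_D Rr (fun z => mlow_set (ihull (fun w => d_lx_flx (DF w)) (Pset Rr z)))
  - L * sup_D Rr (fun z => opnorm (d_y_flx (DF z))).

Definition rate_conditions0 c u s (Rr L : R) (DF : lpoint c u s -> deriv9 c u s) : Prop :=
  mu_s1 Rr L DF < 1 /\ 1 < xi_u1P Rr L DF /\
  mu_cs1 Rr L DF < xi_u1P Rr L DF /\ mu_s1 Rr L DF < xi_cu1P Rr L DF.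

(* z1 in J_u(z2, M): differences of lambda computed in (some) lifts *)
Definition in_Ju c u s (z2 : lpoint c u s) (M : R) (z1 : lpoint c u s) : Prop :=
  exists k : 'cV[int]_c,
    enorm (col_mx (plam z1 + intv k - plam z2) (py z1 - py z2))
      <= M * enorm (px z1 - px z2).

End Defs.

(* Main.v *)
Require Import Defs.
From mathcomp Require Import all_boot all_order all_algebra.
From mathcomp Require Import boolp classical_sets reals.
From mathcomp Require Import topology normedtype derive.
From mathcomp Require Import ring lra.
Import Order.TTheory GRing.Theory Num.Theory.
Import numFieldNormedType.Exports.
Local Open Scope classical_set_scope.
Local Open Scope ring_scope.
Set Implicit Arguments.
Unset Strict Implicit.
Unset Printing Implicit Defensive.


Lemma near_within_eps (R : realType) (A : set R) (x : R) (P : R -> Prop) :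
  (exists2 d : R, 0 < d & forall y, `|y - x| < d -> A y -> P y) ->
  \forall y \near within A (nbhs x), P y.
Proof.
move=> [d d0 H]; rewrite near_withinE; apply/nbhs_ballP; exists d => // y /= hb Ay.
apply: H => //. rewrite distrC. exact: hb.
Qed.

Lemma is_derive_from (R : realType) (f : R -> R) x l :
  (fun h : R => h^-1 *: (f (h *: 1 + x) - f x)) @ 0^' --> l -> is_derive x 1 f l.
Proof.
move=> H; have D : derivable f x 1 by apply: (cvgP l).
by apply: DeriveDef => //; apply: cvg_lim.
Qed.

Section Norms.
Variable R : realType.

Lemma enorm_ge0 n (v : 'cV[R]_n) : 0 <= enorm v.
Proof. exact: sqrtr_ge0. Qed.

Lemma sumsq_ge0 n (v : 'cV[R]_n) : 0 <= \sum_i (v i ord0) ^+ 2.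
Proof. by apply: sumr_ge0 => i _; rewrite sqr_ge0. Qed.

Lemma enorm_sqr n (v : 'cV[R]_n) : enorm v ^+ 2 = \sum_i (v i ord0) ^+ 2.
Proof. by rewrite /enorm sqr_sqrtr // sumsq_ge0. Qed.

Lemma enorm_le_sqr n (v w : 'cV[R]_n) : enorm v ^+ 2 <= enorm w ^+ 2 -> enorm v <= enorm w.
Proof. by rewrite ler_pXn2r // ?nnegrE ?enorm_ge0. Qed.

Lemma cauchy_schwarz n (a b : 'cV[R]_n) :
  (\sum_i a i ord0 * b i ord0) ^+ 2 <= (\sum_i a i ord0 ^+ 2) * (\sum_i b i ord0 ^+ 2).
Proof.
set A := \sum_i _ ^+ 2; set B := \sum_i b i ord0 ^+ 2; set C := \sum_i _ * _.
have B0 : 0 <= B by apply: sumsq_ge0.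
have [Bz|Bp] := eqVneq B 0.
  have bz : forall i, b i ord0 = 0.
    move=> i; apply/eqP; rewrite -sqrf_eq0; apply/eqP.
    by move/eqP: Bz; rewrite psumr_eq0 => [/allP/(_ i (mem_index_enum _))/implyP/(_ isT)/eqP|j _]; rewrite ?sqr_ge0.
  have -> : C = 0 by rewrite /C big1 // => i _; rewrite bz mulr0.
  by rewrite Bz expr0n /= mulr0.
have Bpos : 0 < B by rewrite lt_def Bp B0.
have H : 0 <= \sum_i (B * a i ord0 - C * b i ord0) ^+ 2 by apply: sumr_ge0 => i _; rewrite sqr_ge0.
have E : \sum_i (B * a i ord0 - C * b i ord0) ^+ 2 = B * (A * B - C ^+ 2).
  rewrite (eq_bigr (fun i => B^+2 * a i ord0 ^+ 2 - (2 * B * C) * (a i ord0 * b i ord0) + C^+2 * b i ord0 ^+ 2)); last by move=> i _; ring.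
  rewrite big_split /= sumrB -!mulr_sumr -/A -/B -/C. ring.
move: H; rewrite E pmulr_rge0 // subr_ge0 => H; exact: H.

Qed.


Definition dot n (a b : 'cV[R]_n) := \sum_i a i ord0 * b i ord0.


Lemma sqrt_le_sq (x y : R) : 0 <= y -> x ^+ 2 <= y ^+ 2 -> `|x| <= y.
Proof. by move=> y0 H; rewrite -ler_sqr ?nnegrE // real_normK ?num_real. Qed.

Lemma dot_le n (a b : 'cV[R]_n) : `|dot a b| <= enorm a * enorm b.
Proof.
apply: sqrt_le_sq; first by rewrite mulr_ge0 ?enorm_ge0.
by rewrite exprMn !enorm_sqr; apply: cauchy_schwarz.
Qed.

Lemma enorm_sqr_dot n (a : 'cV[R]_n) : enorm a ^+ 2 = dot a a.
Proof. by rewrite enorm_sqr; apply: eq_bigr => i _; rewrite expr2. Qed.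

Lemma dotDl n (a b w : 'cV[R]_n) : dot (a + b) w = dot a w + dot b w.
Proof. by rewrite /dot -big_split; apply: eq_bigr => i _; rewrite !mxE mulrDl. Qed.
Lemma dotC n (a b : 'cV[R]_n) : dot a b = dot b a.
Proof. by apply: eq_bigr => i _; rewrite mulrC. Qed.
Lemma dotNl n (a w : 'cV[R]_n) : dot (- a) w = - dot a w.
Proof. by rewrite /dot -sumrN; apply: eq_bigr => i _; rewrite !mxE mulNr. Qed.
Lemma dotZl n t (a w : 'cV[R]_n) : dot (t *: a) w = t * dot a w.
Proof. by rewrite /dot mulr_sumr; apply: eq_bigr => i _; rewrite !mxE mulrA. Qed.


Lemma le_sqrt_sq (x y : R) : 0 <= x -> 0 <= y -> x ^+ 2 <= y ^+ 2 -> x <= y.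
Proof. by move=> x0 y0; rewrite ler_pXn2r // ?nnegrE. Qed.

Lemma enorm_triangle n (a b : 'cV[R]_n) : enorm (a + b) <= enorm a + enorm b.
Proof.
apply: le_sqrt_sq; rewrite ?addr_ge0 ?enorm_ge0 //.
rewrite enorm_sqr_dot dotDl dotC dotDl [dot b (a + b)]dotC dotDl [dot b a]dotC -!enorm_sqr_dot.
have := dot_le a b; rewrite ler_norml => /andP[_ H].
rewrite sqrrD mulr2n; lra.
Qed.

Lemma enorm_scale n t (a : 'cV[R]_n) : enorm (t *: a) = `|t| * enorm a.
Proof.
apply/eqP; rewrite -(eqrXn2 (n:=2)) //; rewrite ?mulr_ge0 ?enorm_ge0 //.
rewrite exprMn !enorm_sqr_dot dotZl dotC dotZl mulrA real_normK ?num_real // expr2.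
Qed.

Lemma enormN n (a : 'cV[R]_n) : enorm (- a) = enorm a.
Proof. by rewrite -scaleN1r enorm_scale normrN normr1 mul1r. Qed.

Lemma enorm_sub_sym n (a b : 'cV[R]_n) : enorm (a - b) = enorm (b - a).
Proof. by rewrite -enormN opprB. Qed.

Lemma enorm_entry n (a : 'cV[R]_n) i : `|a i ord0| <= enorm a.
Proof.
apply: sqrt_le_sq; first exact: enorm_ge0.
rewrite enorm_sqr (bigD1 i) //= lerDl; apply: sumr_ge0 => j _; exact: sqr_ge0.
Qed.

Lemma enorm_l1 n (a : 'cV[R]_n) : enorm a <= \sum_i `|a i ord0|.
Proof.
have [H1 H2] : \sum_i a i ord0 ^+ 2 <= (\sum_i `|a i ord0|) ^+ 2 /\ 0 <= \sum_i `|a i ord0|.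
  elim/big_rec2: _ => [|i x y _ [H1 H2]]; first by rewrite expr0n /= lexx.
  have E : `|a i ord0| ^+ 2 = a i ord0 ^+ 2 by rewrite real_normK ?num_real.
  have N0 : 0 <= `|a i ord0| by [].
  split; last by rewrite addr_ge0.
  rewrite sqrrD E mulr2n; nra.
by apply: le_sqrt_sq; rewrite ?enorm_ge0 // enorm_sqr.
Qed.


Lemma enorm_eq0 n (a : 'cV[R]_n) : enorm a = 0 -> a = 0.
Proof.
move=> H; apply/matrixP => i j; rewrite (ord1 j) mxE.
by apply/eqP; rewrite -normr_eq0 eq_le normr_ge0 andbT -H enorm_entry.
Qed.

Lemma enorm0 n : enorm (0 : 'cV[R]_n) = 0.
Proof. by rewrite /enorm big1 ?sqrtr0 // => i _; rewrite mxE expr0n. Qed.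

Lemma enorm_col m n (a : 'cV[R]_m) (b : 'cV[R]_n) :
  enorm (col_mx a b) ^+ 2 = enorm a ^+ 2 + enorm b ^+ 2.
Proof.
by rewrite !enorm_sqr big_split_ord /=; congr (_ + _); apply: eq_bigr => i _;
  rewrite ?col_mxEu ?col_mxEd.
Qed.

Lemma enorm_sqrt_sq n (a : 'cV[R]_n) : Num.sqrt (enorm a ^+ 2) = enorm a.
Proof. by rewrite sqrtr_sqr ger0_norm ?enorm_ge0. Qed.

Lemma enorm_col_l m n (a : 'cV[R]_m) (b : 'cV[R]_n) : enorm a <= enorm (col_mx a b).
Proof. by apply: le_sqrt_sq; rewrite ?enorm_ge0 // enorm_col lerDl sqr_ge0. Qed.
Lemma enorm_col_r m n (a : 'cV[R]_m) (b : 'cV[R]_n) : enorm b <= enorm (col_mx a b).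
Proof. by apply: le_sqrt_sq; rewrite ?enorm_ge0 // enorm_col lerDr sqr_ge0. Qed.

Definition mxl1 m n (A : 'M[R]_(m, n)) := \sum_i \sum_j `|A i j|.

Lemma mxl1_ge0 m n (A : 'M[R]_(m, n)) : 0 <= mxl1 A.
Proof. by apply: sumr_ge0 => i _; apply: sumr_ge0. Qed.

Lemma enorm_mul m n (A : 'M[R]_(m, n)) v : enorm (A *m v) <= mxl1 A * enorm v.
Proof.
apply: (le_trans (enorm_l1 _)); rewrite /mxl1 mulr_suml; apply: ler_sum => i _.
rewrite mxE mulr_suml; apply: (le_trans (ler_norm_sum _ _ _)); apply: ler_sum => j _.
by rewrite normrM ler_wpM2l // enorm_entry.
Qed.

Lemma mxl1_entry m n (A : 'M[R]_(m, n)) i j : `|A i j| <= mxl1 A.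
Proof.
rewrite /mxl1 (bigD1 i) //= (bigD1 j) //= -addrA lerDl addr_ge0 //.
  by apply: sumr_ge0.
by apply: sumr_ge0 => k _; apply: sumr_ge0.
Qed.


Lemma opnorm_le m n (A : 'M[R]_(m, n)) : opnorm A <= mxl1 A.
Proof.
apply: ge_sup; first by exists (enorm (A *m 0)), 0; rewrite enorm0 ler01.
move=> r [v [v1 ->]]; apply: (le_trans (enorm_mul _ _)).
by rewrite -[leRHS]mulr1 ler_wpM2l // mxl1_ge0.
Qed.

Lemma opnorm_ub m n (A : 'M[R]_(m, n)) :
  ubound [set r | exists v : 'cV[R]_n, enorm v <= 1 /\ r = enorm (A *m v)] (opnorm A).
Proof.
apply: ub_le_sup; exists (mxl1 A) => r [v [v1 ->]]; apply: (le_trans (enorm_mul _ _)).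
by rewrite -[leRHS]mulr1 ler_wpM2l // mxl1_ge0.
Qed.

Lemma opnorm_ge0 m n (A : 'M[R]_(m, n)) : 0 <= opnorm A.
Proof. by apply: opnorm_ub; exists 0; rewrite enorm0 ler01 mulmx0 enorm0. Qed.

Lemma opnorm_mul m n (A : 'M[R]_(m, n)) v : enorm (A *m v) <= opnorm A * enorm v.
Proof.
have [v0|vn0] := eqVneq (enorm v) 0.
  by rewrite (enorm_eq0 v0) mulmx0 !enorm0 mulr0.
have vp : 0 < enorm v by rewrite lt_def vn0 enorm_ge0.
rewrite -ler_pdivrMr //; apply: opnorm_ub; exists ((enorm v)^-1 *: v); split.
  by rewrite enorm_scale ger0_norm ?invr_ge0 ?enorm_ge0 // mulVf.
by rewrite -scalemxAr enorm_scale ger0_norm ?invr_ge0 ?enorm_ge0 // mulrC.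
Qed.

Lemma mlow_mul m n (A : 'M[R]_(m, n)) v : mlow A * enorm v <= enorm (A *m v).
Proof.
have [v0|vn0] := eqVneq (enorm v) 0.
  by rewrite v0 mulr0 enorm_ge0.
have vp : 0 < enorm v by rewrite lt_def vn0 enorm_ge0.
rewrite -ler_pdivlMr //; apply: ge_sup; first by exists 0 => w; rewrite mul0r enorm_ge0.
by move=> r /(_ v) H; rewrite ler_pdivlMr.
Qed.

Lemma mlow_ge0 m n (A : 'M[R]_(m, n)) : (0 < n)%N -> 0 <= mlow A.
Proof.
move=> n0; apply: ub_le_sup; last by move=> w; rewrite mul0r enorm_ge0.
pose e : 'cV[R]_n := delta_mx (Ordinal n0) ord0.
have e1 : enorm e = 1.
  rewrite /enorm (bigD1 (Ordinal n0)) //= big1 ?addr0 ?mxE ?eqxx ?expr1n ?sqrtr1 //.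
  by move=> i /negbTE ni; rewrite mxE ni expr0n.
by exists (enorm (A *m e)) => r /(_ e); rewrite e1 mulr1.
Qed.

Lemma mlow_set_ge0 m n (AA : set 'M[R]_(m, n)) : (0 < n)%N -> 0 <= mlow_set AA.
Proof.
move=> n0; rewrite /mlow_set; set S := [set r | _].
have [[r Er]|nE] := pselect (exists r, S r).
  apply: lb_le_inf; first by exists r.
  by move=> y [A _ ->]; apply: mlow_ge0.
rewrite (_ : S = set0) ?inf0 //; apply/seteqP; split=> x // Sx; exfalso; apply: nE; exists x; exact: Sx.
Qed.

Lemma mlow_set_le m n (AA : set 'M[R]_(m, n)) A : (0 < n)%N -> AA A -> mlow_set AA <= mlow A.
Proof.
move=> n0 AAA; apply: ge_inf; last by exists A.
by exists 0 => y [B _ ->]; apply: mlow_ge0.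
Qed.


Lemma dotDr n (a b w : 'cV[R]_n) : dot w (a + b) = dot w a + dot w b.
Proof. by rewrite dotC dotDl !(dotC w). Qed.
Lemma dotNr n (a w : 'cV[R]_n) : dot w (- a) = - dot w a.
Proof. by rewrite dotC dotNl dotC. Qed.
Lemma dotBr n (a b w : 'cV[R]_n) : dot w (a - b) = dot w a - dot w b.
Proof. by rewrite dotDr dotNr. Qed.
Lemma dotZr n t (a w : 'cV[R]_n) : dot w (t *: a) = t * dot w a.
Proof. by rewrite dotC dotZl dotC. Qed.

End Norms.

Section LPoint.
Variables (R : realType) (c u s : nat).
Local Notation lp := (lpoint R c u s).

Definition padd (a b : lp) : lp := (plam a + plam b, px a + px b, py a + py b).
Definition pscale (t : R) (a : lp) : lp := (t *: plam a, t *: px a, t *: py a).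
Definition flat (z : lp) : 'cV[R]_(c + u + s) := col_mx (col_mx (plam z) (px z)) (py z).

Lemma pnormE (z : lp) : pnorm z = enorm (flat z).
Proof. by rewrite /pnorm /flat -[RHS]enorm_sqrt_sq !enorm_col. Qed.

Lemma pnorm_ge0 (z : lp) : 0 <= pnorm z.
Proof. by rewrite pnormE enorm_ge0. Qed.

Lemma pnorm_px (z : lp) : enorm (px z) <= pnorm z.
Proof. by rewrite pnormE /flat (le_trans _ (enorm_col_l _ _)) // enorm_col_r. Qed.
Lemma pnorm_plam (z : lp) : enorm (plam z) <= pnorm z.
Proof. by rewrite pnormE /flat (le_trans _ (enorm_col_l _ _)) // enorm_col_l. Qed.
Lemma pnorm_py (z : lp) : enorm (py z) <= pnorm z.
Proof. by rewrite pnormE /flat enorm_col_r. Qed.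

Lemma flat_psub (a b : lp) : flat (psub a b) = flat a - flat b.
Proof. by rewrite /flat /psub /= opp_col_mx add_col_mx opp_col_mx add_col_mx. Qed.
Lemma flat_pscale t (a : lp) : flat (pscale t a) = t *: flat a.
Proof. by rewrite /flat /pscale /= !scale_col_mx. Qed.

Lemma pnorm_scale t (a : lp) : pnorm (pscale t a) = `|t| * pnorm a.
Proof. by rewrite !pnormE flat_pscale enorm_scale. Qed.

Lemma dapply_scale (d : deriv9 R c u s) t (a : lp) : dapply d (pscale t a) = pscale t (dapply d a).
Proof.
by rewrite /dapply /pscale /plam /px /py /= !scalerDr -!scalemxAr.
Qed.

Lemma dapply_sub (d : deriv9 R c u s) (a b : lp) : dapply d (psub a b) = psub (dapply d a) (dapply d b).
Proof.
rewrite /dapply /psub /plam /px /py /= !mulmxBr.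
set a1 := a.1.1; set a2 := a.1.2; set a3 := a.2; set b1 := b.1.1; set b2 := b.1.2; set b3 := b.2.
have E : forall (n : nat) (X1 X2 X3 Y1 Y2 Y3 : 'cV[R]_n),
  X1 - Y1 + (X2 - Y2) + (X3 - Y3) = X1 + X2 + X3 - (Y1 + Y2 + Y3).
  by move=> n X1 X2 X3 Y1 Y2 Y3; rewrite !opprD !addrA; congr (_ + _);
    rewrite -!addrA; congr (_ + _); rewrite addrC -!addrA; congr (_ + _);
    rewrite addrC -!addrA; congr (_ + _); rewrite addrC.
by rewrite !E.
Qed.


Definition seg (z v : lp) (t : R) : lp := padd z (pscale t v).

Lemma seg_sub (z v : lp) t t0 : psub (seg z v t) (seg z v t0) = pscale (t - t0) v.
Proof.
have E : forall n (Z V : 'cV[R]_n), Z + t *: V - (Z + t0 *: V) = (t - t0) *: V.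
  by move=> n Z V; rewrite scalerBl opprD addrACA subrr add0r.
by rewrite /seg /padd /pscale /psub /plam /px /py /= !E.
Qed.

Lemma dot_px_le (a : 'cV[R]_u) (X : lp) : `|dot a (px X)| <= enorm a * pnorm X.
Proof. by apply: (le_trans (dot_le _ _)); rewrite ler_wpM2l ?enorm_ge0 ?pnorm_px. Qed.

Lemma core_est (Rr : R) F DF (hF : is_C1_with Rr F DF) (z v : lp) (a : 'cV[R]_u)
  (hseg : forall t, 0 <= t <= 1 -> Dom Rr (seg z v t)) t0 (ht0 : 0 <= t0 <= 1)
  e (he : 0 < e) :
  exists2 del, 0 < del & forall t, 0 <= t <= 1 -> `|t - t0| < del ->
   `|dot a (px (F (seg z v t))) - dot a (px (F (seg z v t0)))
      - (t - t0) * dot a (px (dapply (DF (seg z v t0)) v))| <= e * `|t - t0|.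
Proof.
case: hF => hD _.
set A := enorm a; set P := pnorm v.
have A0 : 0 <= A by apply: enorm_ge0.
have P0 : 0 <= P by apply: pnorm_ge0.
set K := (A + 1) * (P + 1).
have Kp : 0 < K by rewrite mulr_gt0 // ltr_wpDl.
have [d0 d0p H] := hD _ (hseg _ ht0) (e / K) (divr_gt0 he Kp).
have P1 : 0 < P + 1 by rewrite ltr_wpDl.
exists (d0 / (P + 1)); first by rewrite divr_gt0.
move=> t ht htt.
set D := `|t - t0|.
have D0 : 0 <= D by apply: normr_ge0.
have W := H (seg z v t) (hseg _ ht).
rewrite seg_sub pnorm_scale -/D -/P in W.
have DP : D * P < d0.
  apply: (le_lt_trans _ (_ : D * (P + 1) < d0)).
    by rewrite ler_wpM2l // lerDl.
  by rewrite -ltr_pdivlMr.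
have {}W := W DP.
set X := psub _ _ in W.
have EX : dot a (px (F (seg z v t))) - dot a (px (F (seg z v t0)))
      - (t - t0) * dot a (px (dapply (DF (seg z v t0)) v)) = dot a (px X).
  by rewrite /X dapply_scale /psub /pscale /px /= !dotBr dotZr.
rewrite EX; apply: (le_trans (dot_px_le _ _)); rewrite -/A.
apply: (le_trans (ler_wpM2l A0 W)).
have -> : A * (e / K * (D * P)) = (e * D) * ((A * P) / K) by ring.
rewrite -[leRHS]mulr1; apply: ler_wpM2l; first by rewrite mulr_ge0 // ltW.
rewrite ler_pdivrMr // mul1r /K.
apply: ler_pM; rewrite ?lerDl //.

Qed.


Lemma mvt_seg (Rr : R) F DF (hF : is_C1_with Rr F DF) (z v : lp) (a : 'cV[R]_u)
  (hseg : forall t, 0 <= t <= 1 -> Dom Rr (seg z v t)) :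
  exists2 tau, 0 < tau < 1 &
    dot a (px (F (seg z v 1))) - dot a (px (F (seg z v 0)))
    = dot a (px (dapply (DF (seg z v tau)) v)).
Proof.
set phi := fun t => dot a (px (F (seg z v t))).
set dphi := fun t => dot a (px (dapply (DF (seg z v t)) v)).
have [||tau] := MVT (f:=phi) (df:=dphi) (a:=0) (b:=1) ltr01.
- move=> x; rewrite in_itv /= => /andP[x0 x1]; apply: is_derive_from.
  apply/cvgrPdist_le => e e0.
  have ht0 : 0 <= x <= 1 by rewrite !ltW.
  have [d d0 Hd] := core_est hF a hseg ht0 e0.
  apply: near_within_eps.
  exists (Num.min d (Num.min x (1 - x))); first by rewrite !lt_min d0 x0 subr_gt0 x1.
  move=> h; rewrite subr0 !lt_min => /and3P[hd hx h1x] hne.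
  have ht : 0 <= h + x <= 1.
    move: (hx) (h1x); rewrite !ltr_norml => /andP[? ?] /andP[? ?].
    apply/andP; split; lra.
  have := Hd (h + x) ht; rewrite addrK => /(_ hd).
  rewrite -[h *: 1]/(h * 1) mulr1 /phi /dphi => H.
  rewrite -[_ *: _]/(_ * _).
  set Q := (_ - _ - _) in H.
  have hn0 : 0 < `|h| by rewrite normr_gt0.
  rewrite -(ler_pM2l hn0) -normrM mulrBr mulrA mulrV ?mul1r ?unitfE //.
  by rewrite -normrN opprB [_ * e]mulrC.
- apply/subspace_continuousP => x Ax; apply/cvgrPdist_le => e e0.
  have Ax' : 0 <= x <= 1 by move: Ax; rewrite /= in_itv.
  have [d d0 Hd] := core_est hF a hseg Ax' ltr01.
  apply: near_within_eps.
  set M := `|dphi x| + 1.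
  have M0 : 0 < M by rewrite ltr_wpDl.
  exists (Num.min d (e / M)); first by rewrite lt_min d0 divr_gt0.
  move=> y; rewrite lt_min => /andP[yd ye] Ay.
  have Ay' : 0 <= y <= 1 by move: Ay; rewrite /= in_itv.
  have := Hd y Ay' yd; rewrite mul1r => H.
  have T : `|phi y - phi x| <= `|y - x| * M.
    rewrite /M mulrDr mulr1 -[phi y - phi x](subrK ((y - x) * dphi x)).
    apply: (le_trans (ler_normD _ _)); rewrite normrM addrC; apply: lerD => //.
  rewrite distrC; apply: (le_trans T).
  by rewrite -ler_pdivlMr // ltW.
- by move=> tau01; rewrite subr0 mulr1 => E; exists tau; rewrite // -in_itv.
Qed.

End LPoint.


Section Cont.
Variable R : realType.

Lemma ball_rV N (v w : 'rV[R]_N) d : ball v d w -> forall i, `|w ord0 i - v ord0 i| < d.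
Proof.
move=> [_ H] i; have := H ord0 i; rewrite /ball /= distrC //.
Qed.

Lemma l1_small N (v w : 'rV[R]_N) d : 0 < d -> ball v (d / (N%:R + 1)) w ->
  \sum_i `|w ord0 i - v ord0 i| < d.
Proof.
move=> d0 /ball_rV H.
have N1 : 0 < N%:R + 1 :> R by rewrite ltr_wpDl.
apply: (le_lt_trans (ler_sum _ (fun i _ => ltW (H i)))).
rewrite sumr_const (_ : #|_| = N); last exact: card_ord.
set t := d / _.
rewrite -mulr_natl.
have tp : 0 < t by rewrite /t divr_gt0.
have E : d = t * (N%:R + 1) by rewrite /t divfK // gt_eqF.
rewrite [in ltRHS]E mulrDr mulr1 mulrC ltrDl //.
Qed.

Lemma bnd (A : set R) : bounded_set A -> exists M, forall x, A x -> `|x| <= M.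
Proof.
move=> [M [Mreal HM]]; exists (M + 1) => x Ax; apply: (HM (M + 1)) => //.
by rewrite ltrDl.
Qed.


Lemma cont_within N (A : set 'rV[R]_N) (f : 'rV[R]_N -> R) :
  (forall v, A v -> forall e, 0 < e -> exists2 d, 0 < d &
     forall w, A w -> \sum_i `|w ord0 i - v ord0 i| < d -> `|f w - f v| < e) ->
  {within A, continuous f}.
Proof.
move=> H; apply/subspace_continuousP => v Av; apply/cvgrPdist_lt => e e0.
have [d d0 Hd] := H v Av e e0.
rewrite near_withinE; apply/nbhs_ballP.
exists (d / (N%:R + 1)); first by rewrite /= divr_gt0 // ltr_wpDl.
move=> w /= bw Aw; rewrite distrC; apply: Hd => //; exact: l1_small.
Qed.

Lemma cont_full N (f : 'rV[R]_N -> R) :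
  (forall v : 'rV[R]_N, forall e, 0 < e -> exists2 d, 0 < d &
     forall w : 'rV[R]_N, \sum_i `|w ord0 i - v ord0 i| < d -> `|f w - f v| < e) ->
  continuous f.
Proof.
move=> H; apply/continuous_subspace_setT; apply: cont_within => v _ e e0.
by have [d d0 Hd] := H v e e0; exists d => // w _; apply: Hd.
Qed.

End Cont.

Section Emb.
Variables (R : realType) (c u s : nat).
Local Notation lp := (lpoint R c u s).

Lemma enorm_rev n (a b : 'cV[R]_n) : `|enorm a - enorm b| <= enorm (a - b).
Proof.
rewrite ler_distl; apply/andP; split.
  have := enorm_triangle (b - a) a; rewrite subrK enorm_sub_sym; lra.
have := enorm_triangle (a - b) b; rewrite subrK; lra.
Qed.

Lemma dist_add (a b c' d : R) : `|(a + b) - (c' + d)| <= `|a - c'| + `|b - d|.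
Proof. by rewrite opprD addrACA ler_normD. Qed.

Lemma mxdist_rev m n (A B Z : 'M[R]_(m, n)) : `|mxdist A Z - mxdist B Z| <= mxdist A B.
Proof.
rewrite /mxdist -sumrB; apply: (le_trans (ler_norm_sum _ _ _)); apply: ler_sum => i _.
rewrite -sumrB; apply: (le_trans (ler_norm_sum _ _ _)); apply: ler_sum => j _.
by apply: (le_trans (ler_dist_dist _ _)); rewrite opprB addrA subrK.
Qed.

Definition zero9 : deriv9 R c u s := Deriv9 0 0 0 0 0 0 0 0 0.
Definition d9size (d : deriv9 R c u s) := d9dist d zero9.

Lemma d9size_rev d e : `|d9size d - d9size e| <= d9dist d e.
Proof.
rewrite /d9size /d9dist.
do 8! (apply: (le_trans (dist_add _ _ _ _)); apply: lerD; last exact: mxdist_rev).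
exact: mxdist_rev.
Qed.

Definition Ev (v : 'rV[R]_(c + u + s)) : lp :=
  ((lsubmx (lsubmx v))^T, (rsubmx (lsubmx v))^T, (rsubmx v)^T).

Lemma flat_Ev v : flat (Ev v) = v^T.
Proof. by rewrite /flat /Ev /plam /px /py /= -!tr_row_mx !hsubmxK. Qed.

Lemma Ev_flat (z : lp) : Ev (flat z)^T = z.
Proof.
case: z => [[a b] d].
by rewrite /Ev /flat /plam /px /py /= !tr_col_mx !row_mxKl !row_mxKr !trmxK.
Qed.

Lemma pnorm_Ev v w : pnorm (psub (Ev w) (Ev v)) <= \sum_i `|w ord0 i - v ord0 i|.
Proof.
rewrite pnormE flat_psub !flat_Ev; apply: (le_trans (enorm_l1 _)).
by apply: ler_sum => i _; rewrite !mxE.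
Qed.


Lemma flat_entry (Rr : R) (z : lp) : Rr <= 1 -> Dom Rr z ->
  (forall i, 0 <= plam z i ord0 <= 1) -> forall i, `|flat z i ord0| <= 1.
Proof.
move=> R1 [Dx Dy] Hl i; rewrite /flat.
case: (split_ordP i) => j ->; rewrite ?col_mxEu ?col_mxEd; last first.
  by apply: (le_trans (enorm_entry _ _)); apply: le_trans Dy R1.
case: (split_ordP j) => k ->; rewrite ?col_mxEu ?col_mxEd; last first.
  by apply: (le_trans (enorm_entry _ _)); apply: le_trans Dx R1.
by have /andP[h0 h1] := Hl k; rewrite ger0_norm.
Qed.

Lemma DF_bounded_cell (Rr : R) F DF : Rr <= 1 -> is_C1_with Rr F DF ->
  exists M, forall z : lp, Dom Rr z -> (forall i, 0 <= plam z i ord0 <= 1) ->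
    d9size (DF z) <= M.
Proof.
move=> R1 hF.
pose box := [set v : 'rV[R]_(c + u + s) | forall i, (fun=> `[-1, 1]%classic) i (v ord0 i)].
pose DomE := [set v : 'rV[R]_(c + u + s) | Dom Rr (Ev v)].
have cbox : compact box := rV_compact (fun _ => @segment_compact R (-1) 1).
have cDomE : closed DomE.
  have -> : DomE = (fun v => enorm (px (Ev v))) @^-1` [set x | x <= Rr] `&`
                   (fun v => enorm (py (Ev v))) @^-1` [set x | x <= Rr].
    by apply/seteqP; split => v.
  apply: closedI; apply: preimage_closed; try exact: closed_le.
  - move=> v _; apply: cont_full => {}v e e0; exists e => // w Hs.
    apply: (le_lt_trans (enorm_rev _ _)); apply: (le_lt_trans _ Hs).
    apply: (le_trans _ (pnorm_Ev v w)); exact: (pnorm_px (psub (Ev w) (Ev v))).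
  - move=> v _; apply: cont_full => {}v e e0; exists e => // w Hs.
    apply: (le_lt_trans (enorm_rev _ _)); apply: (le_lt_trans _ Hs).
    apply: (le_trans _ (pnorm_Ev v w)); exact: (pnorm_py (psub (Ev w) (Ev v))).
have cK : compact (box `&` DomE) := compact_closedI cbox cDomE.
have hc : {within box `&` DomE, continuous (fun v => d9size (DF (Ev v)))}.
  apply: cont_within => v [_ Dv] e e0; have [d d0 Hd] := hF.2 _ Dv e e0.
  exists d => // w [_ Dw] Hs.
  apply: (le_lt_trans (d9size_rev _ _)); apply: Hd => //.
  exact: (le_lt_trans (pnorm_Ev _ _) Hs).
have [M HM] := bnd (compact_bounded (continuous_compact hc cK)).
exists M => z Dz Hz; apply: (le_trans (ler_norm _) (HM _ _)).
exists ((flat z)^T); last by rewrite Ev_flat.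
split; last by rewrite /DomE /= Ev_flat.
move=> i /=; rewrite in_itv /= mxE.
by have := flat_entry R1 Dz Hz i; rewrite ler_norml.
Qed.

End Emb.


Section Period.
Variables (R : realType) (c u s : nat).
Local Notation lp := (lpoint R c u s).

Definition Mat (d : deriv9 R c u s) : 'M[R]_(c + u + s) :=
  block_mx (block_mx (dll d) (dlx d) (dxl d) (dxx d)) (col_mx (dly d) (dxy d))
           (row_mx (dyl d) (dyx d)) (dyy d).

Lemma flat_dapply d (v : lp) : flat (dapply d v) = Mat d *m flat v.
Proof.
rewrite /Mat /flat /dapply /plam /px /py /= mul_block_col mul_block_col mul_col_mx
  mul_row_col add_col_mx.

by [].
Qed.

Lemma Mat_inj d e : Mat d = Mat e -> d = e.
Proof.
case: d => a1 a2 a3 a4 a5 a6 a7 a8 a9; case: e => b1 b2 b3 b4 b5 b6 b7 b8 b9.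
rewrite /Mat /= => /eq_block_mx [/eq_block_mx [-> -> -> ->] /eq_col_mx [-> ->]
  /eq_row_mx [-> ->] ->] //.
Qed.

Lemma Mat_ext d e : (forall X : 'cV[R]_(c + u + s), Mat d *m X = Mat e *m X) -> d = e.
Proof.
move=> H; apply: Mat_inj; apply/matrixP => i j.
have := H (delta_mx j 0); rewrite -!colE => /matrixP /(_ i 0).
by rewrite !mxE.
Qed.

Lemma pnorm_dapply d (v : lp) : pnorm (dapply d v) <= mxl1 (Mat d) * pnorm v.
Proof. by rewrite !pnormE flat_dapply enorm_mul. Qed.

Lemma F_cont (Rr : R) F DF (hF : is_C1_with Rr F DF) (z : lp) (Dz : Dom Rr z)
  e (e0 : 0 < e) : exists2 d, 0 < d & forall w, Dom Rr w ->
    pnorm (psub w z) < d -> pnorm (psub (F w) (F z)) < e.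
Proof.
have [d0 d00 H] := hF.1 z Dz 1 ltr01.
set C := mxl1 (Mat (DF z)).
have CC : 0 <= C := mxl1_ge0 _.
have C0 : 0 < C + 1 + 1 by lra.
exists (Num.min d0 (e / (C + 1 + 1))); first by rewrite lt_min d00 divr_gt0.
move=> w Dw; rewrite lt_min => /andP[wd we].
have {}H := H w Dw wd; rewrite mul1r in H.
move: H; rewrite !pnormE !flat_psub flat_dapply flat_psub => H.
set X := flat (F w) - flat (F z) in H *; set V := flat w - flat z in H we *.
have HV : enorm (Mat (DF z) *m V) <= C * enorm V by apply: enorm_mul.
have : enorm X <= enorm (X - Mat (DF z) *m V) + enorm (Mat (DF z) *m V).
  by rewrite -[X in enorm X <= _](subrK (Mat (DF z) *m V)) enorm_triangle.
have V0 : 0 <= enorm V by apply: enorm_ge0.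
move: we; rewrite ltr_pdivlMr // pnormE flat_psub -/V => we T.

nra.
Qed.


Lemma int_small (n : int) : `|n%:~R : R| < 1 -> n = 0.
Proof.
rewrite -intr_norm (_ : 1 = 1%:~R) // ltr_int.
by case: n => [[|m]|m] //=; rewrite ?ltrn1 //.
Qed.

Lemma intv_eq (k1 k2 : 'cV[int]_c) :
  (forall i, `|(intv R k1 - intv R k2) i ord0| < 1) -> intv R k1 = intv R k2.
Proof.
move=> H; apply/matrixP => i j; rewrite (ord1 j).
have := H i; rewrite !mxE -intrB => /int_small /eqP; rewrite subr_eq0 => /eqP ->.
by [].
Qed.

Definition shift (w : lp) (k : 'cV[int]_c) : lp := (plam w + intv R k, px w, py w).

Lemma psub_shift (w w' : lp) k : psub (shift w' k) (shift w k) = psub w' w.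
Proof. by rewrite /psub /shift /plam /px /py /= opprD addrACA subrr addr0. Qed.

Lemma pnorm_subC (a b : lp) : pnorm (psub a b) = pnorm (psub b a).
Proof. by rewrite !pnormE !flat_psub enorm_sub_sym. Qed.

Lemma lift_loc (Rr : R) F DF (hF : is_C1_with Rr F DF) (hL : is_lift Rr F)
  (w : lp) (Dw : Dom Rr w) k : exists2 d, 0 < d & forall w', Dom Rr w' ->
    pnorm (psub w' w) < d ->
    psub (F (shift w' k)) (F (shift w k)) = psub (F w') (F w).
Proof.
have h2 : 0 < 2^-1 :> R by rewrite invr_gt0.
have [d1 d10 H1] := F_cont hF Dw h2.
have Dsw : Dom Rr (shift w k) by [].
have [d2 d20 H2] := F_cont hF Dsw h2.
exists (Num.min d1 d2); first by rewrite lt_min d10 d20.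
move=> w' Dw'; rewrite lt_min => /andP[wd1 wd2].
have P1 := H1 _ Dw' wd1.
have Dsw' : Dom Rr (shift w' k) by [].
have P2 := H2 _ Dsw' (ltac:(by rewrite psub_shift)).
have [Ex1 [Ey1 [k1 El1]]] := hL w' Dw' k.
have [Ex2 [Ey2 [k2 El2]]] := hL w Dw k.
rewrite /shift in P2 *.
have Ek : intv R k1 = intv R k2.
  apply: intv_eq => i.
  have -> : intv R k1 - intv R k2 =
    (plam (F (plam w' + intv R k, px w', py w')) - plam (F (plam w + intv R k, px w, py w)))
    - (plam (F w') - plam (F w)).
    by rewrite El1 El2; apply/matrixP => a b; rewrite !mxE; ring.
  apply: (le_lt_trans (enorm_entry _ _)); apply: (le_lt_trans (enorm_triangle _ _)).
  rewrite enormN.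
  have Q1 := le_lt_trans (pnorm_plam _) P1.
  have Q2 := le_lt_trans (pnorm_plam _) P2.
  rewrite /psub /plam /= in Q1 Q2 *.
  have -> : (1 : R) = 2^-1 + 2^-1 by rewrite -div1r -splitr.
  exact: ltrD.
rewrite /psub Ex1 Ex2 Ey1 Ey2 El1 El2 Ek.
by congr (_, _, _); apply/matrixP => a b; rewrite !mxE; ring.
Qed.


Lemma psub_seg (z v : lp) t : psub (seg z v t) z = pscale t v.
Proof.
by rewrite /psub /seg /padd /pscale /plam /px /py /=; congr (_, _, _);
  apply/matrixP => a b; rewrite !mxE; ring.
Qed.

Lemma flat_padd (a b : lp) : flat (padd a b) = flat a + flat b.
Proof. by rewrite /flat /padd /= !add_col_mx. Qed.

Lemma Dom_seg (Rr : R) (w q : lp) t : Dom Rr w -> Dom Rr q -> 0 <= t <= 1 ->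
  Dom Rr (seg w (psub q w) t).
Proof.
move=> [Dwx Dwy] [Dqx Dqy] /andP[t0 t1].
have K : forall n (W Q : 'cV[R]_n), enorm W <= Rr -> enorm Q <= Rr ->
    enorm (W + t *: (Q - W)) <= Rr.
  move=> n W Q HW HQ.
  have -> : W + t *: (Q - W) = (1 - t) *: W + t *: Q.
    by apply/matrixP => a b; rewrite !mxE; ring.
  apply: (le_trans (enorm_triangle _ _)); rewrite !enorm_scale.
  rewrite (ger0_norm t0) ger0_norm ?subr_ge0 //.
  have : (1 - t) * enorm W <= (1 - t) * Rr by rewrite ler_wpM2l ?subr_ge0.
  have : t * enorm Q <= t * Rr by rewrite ler_wpM2l.
  lra.
by split; apply: K.
Qed.

Lemma small_zero (x y : R) : (forall e, 0 < e -> x <= e * y) -> 0 <= y -> x <= 0.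
Proof.
move=> H y0; rewrite leNgt; apply/negP => x0.
have y1 : 0 < y + 1 by rewrite ltr_wpDl.
have := H (x / (y + 1)) (divr_gt0 x0 y1).
rewrite mulrAC ler_pdivlMr // => Hx; nra.
Qed.

Lemma Mat_eq_dir (Rr : R) F DF (hF : is_C1_with Rr F DF) (hL : is_lift Rr F)
  (w : lp) (Dw : Dom Rr w) k (q : lp) (Dq : Dom Rr q) :
  Mat (DF (shift w k)) *m (flat q - flat w) = Mat (DF w) *m (flat q - flat w).
Proof.
set A := DF (shift w k); set B := DF w; set D := flat q - flat w.
apply/eqP; rewrite -subr_eq0 -mulmxBl; apply/eqP; apply: enorm_eq0.
set Y := (Mat A - Mat B) *m D.
apply/eqP; rewrite eq_le enorm_ge0 andbT.
apply: (small_zero (y := enorm D)) => [e e0|]; last exact: enorm_ge0.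
have e2 : 0 < e / 2 by rewrite divr_gt0.
have Dsw : Dom Rr (shift w k) by [].
have [d1 d10 H1] := hF.1 (shift w k) Dsw (e / 2) e2.
have [d2 d20 H2] := hF.1 w Dw (e / 2) e2.
have [d3 d30 H3] := lift_loc hF hL Dw k.
set d := Num.min d1 (Num.min d2 d3).
have d0 : 0 < d by rewrite !lt_min d10 d20 d30.
set P := pnorm (psub q w).
have P0 : 0 <= P by apply: pnorm_ge0.
have P1 : 0 < P + 1 by rewrite ltr_wpDl.
set t := Num.min 1 (d / (P + 1)).
have t0 : 0 < t by rewrite lt_min ltr01 divr_gt0.
have t1 : t <= 1 by rewrite ge_min lexx.
have tP : t * P < d.
  have : t <= d / (P + 1) by rewrite ge_min lexx orbT.
  rewrite ler_pdivlMr // => h; nra.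
set w' := seg w (psub q w) t.
have Dw' : Dom Rr w' by apply: Dom_seg => //; rewrite ltW.
have Ew' : psub w' w = pscale t (psub q w) by apply: psub_seg.
have Nw' : pnorm (psub w' w) = t * P by rewrite Ew' pnorm_scale ger0_norm // ltW.
have [Nd1 [Nd2 Nd3]] : pnorm (psub w' w) < d1 /\ pnorm (psub w' w) < d2 /\ pnorm (psub w' w) < d3.
  by rewrite Nw'; move: tP; rewrite !lt_min => /andP[-> /andP[-> ->]].
have G := H3 w' Dw' Nd3.
have Dsw' : Dom Rr (shift w' k) by [].
have H1' := H1 (shift w' k) Dsw' (ltac:(by rewrite psub_shift)).
have H2' := H2 w' Dw' Nd2.
rewrite psub_shift G Ew' in H1'; rewrite Ew' in H2'.
rewrite !pnormE !flat_psub !flat_dapply flat_pscale flat_psub -/D in H1' H2'.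
set Gf := flat (F w') - flat (F w) in H1' H2'.
have EY : t *: Y = (Gf - Mat B *m (t *: D)) - (Gf - Mat A *m (t *: D)).
  rewrite /Y -scalemxAr mulmxBl -!scalemxAr.
  by apply/matrixP => a b; rewrite !mxE; ring.
have : enorm (t *: Y) <= e * enorm (t *: D).
  rewrite EY; apply: (le_trans (enorm_triangle _ _)); rewrite enormN.
  have -> : e * enorm (t *: D) = e / 2 * enorm (t *: D) + e / 2 * enorm (t *: D).
    by rewrite -mulrDl -splitr.
  by apply: lerD.
rewrite !enorm_scale (ger0_norm (ltW t0)) => h.
rewrite -(ler_pM2l t0); move: h; rewrite mulrCA; exact.
Qed.


Lemma DF_period (Rr : R) F DF (hF : is_C1_with Rr F DF) (hL : is_lift Rr F)
  (Rr0 : 0 < Rr) (w : lp) (Dw : Dom Rr w) k : DF (shift w k) = DF w.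
Proof.
apply: Mat_ext => X.
pose q0 : lp := (plam w, 0, 0).
have Dq0 : Dom Rr q0.
  by split; rewrite /q0 /px /py /= enorm0; apply: ltW.
set V : lp := Ev X^T.
have PV : 0 < pnorm V + 1 by rewrite ltr_wpDl ?pnorm_ge0.
set dl := Rr / (pnorm V + 1).
have dl0 : 0 < dl by rewrite divr_gt0.
have dlV : dl * pnorm V <= Rr.
  rewrite /dl mulrAC ler_pdivrMr //; apply: ler_wpM2l; first exact: ltW.
  by rewrite lerDl.
pose q1 := padd q0 (pscale dl V).
have Dq1 : Dom Rr q1.
  rewrite /Dom /q1 /padd /pscale /q0 /px /py /= !add0r !enorm_scale (ger0_norm (ltW dl0)).
  split; apply: le_trans dlV; apply: ler_wpM2l; rewrite ?(ltW dl0) //.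
    exact: (pnorm_px V).
  exact: (pnorm_py V).
have E0 := Mat_eq_dir hF hL Dw k Dq0.
have E1 := Mat_eq_dir hF hL Dw k Dq1.
have Fq1 : flat q1 - flat w = (flat q0 - flat w) + dl *: X.
  by rewrite /q1 flat_padd flat_pscale /V flat_Ev trmxK addrAC.
rewrite Fq1 (mulmxDr (Mat (DF (shift w k)))) (mulmxDr (Mat (DF w))) E0 in E1; move/addrI: E1 => E1.
by move: E1; rewrite -!scalemxAr => /scalerI; apply; rewrite gt_eqF.
Qed.


Lemma DF_bounded (Rr : R) F DF : 0 < Rr -> Rr <= 1 -> is_lift Rr F -> is_C1_with Rr F DF ->
  exists M, forall z : lp, Dom Rr z -> d9size (DF z) <= M.
Proof.
move=> Rr0 R1 hL hF.
have [M HM] := DF_bounded_cell R1 hF.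
exists M => z Dz.
pose k : 'cV[int]_c := \col_i (- Num.floor (plam z i ord0)).
rewrite -(DF_period hF hL Rr0 Dz k); apply: HM => // i.
rewrite /shift /plam /= !mxE intrN.
have := real_floor_le (num_real (z.1.1 i ord0)).
have := real_floorD1_gt (num_real (z.1.1 i ord0)).
rewrite intrD => h1 h2; apply/andP; split; lra.
Qed.

End Period.


Section Final.
Variables (R : realType) (c u s : nat).
Local Notation lp := (lpoint R c u s).

Lemma seg0 (z v : lp) : seg z v 0 = z.
Proof.
case: z => [[a b] d]; rewrite /seg /padd /pscale /plam /px /py /=.
by congr (_, _, _); apply/matrixP => i j; rewrite !mxE; ring.
Qed.

Lemma seg1 (z q : lp) : seg z (psub q z) 1 = q.
Proof.
case: q => [[a b] d]; rewrite /seg /padd /pscale /psub /plam /px /py /=.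
by congr (_, _, _); apply/matrixP => i j; rewrite !mxE; ring.
Qed.

Lemma mxdist0 m n (A : 'M[R]_(m, n)) : mxdist A 0 = mxl1 A.
Proof. by apply: eq_bigr => i _; apply: eq_bigr => j _; rewrite mxE subr0. Qed.

Lemma d9size_split (d : deriv9 R c u s) : d9size d =
  mxl1 (dll d) + mxl1 (dlx d) + mxl1 (dly d) + mxl1 (dxl d) + mxl1 (dxx d) +
  mxl1 (dxy d) + mxl1 (dyl d) + mxl1 (dyx d) + mxl1 (dyy d).
Proof. by rewrite /d9size /d9dist /zero9 /= !mxdist0. Qed.

Lemma mxl1_row m n1 n2 (A : 'M[R]_(m, n1)) (B : 'M[R]_(m, n2)) :
  mxl1 (row_mx A B) = mxl1 A + mxl1 B.
Proof.
rewrite /mxl1 -big_split; apply: eq_bigr => i _.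
by rewrite big_split_ord /=; congr (_ + _); apply: eq_bigr => j _;
  rewrite ?row_mxEl ?row_mxEr.
Qed.

Lemma dot_delta n (i : 'I_n) (x : 'cV[R]_n) : dot (delta_mx i 0) x = x i ord0.
Proof.
rewrite /dot (bigD1 i) //= big1 ?addr0 ?mxE ?eqxx ?mul1r //.
by move=> j /negbTE ji; rewrite mxE ji mul0r.
Qed.

End Final.

Unset Implicit Arguments.
Local Close Scope classical_set_scope.

Theorem lemma4p5 (R : realType) (c u s : nat) (Rr L : R)
  (F : lpoint R c u s -> lpoint R c u s) (DF : lpoint R c u s -> deriv9 R c u s)
  (z1 z2 : lpoint R c u s) :
  (0 < c)%N -> (0 < u)%N -> (0 < s)%N ->
  0 < Rr -> Rr < 2^-1 / 2 ->
  2 * Rr / 2^-1 < L -> L < 1 ->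
  is_lift Rr F -> is_C1_with Rr F DF ->
  rate_conditions0 Rr L DF ->
  Dom Rr z1 -> Dom Rr z2 -> in_Ju z2 L^-1 z1 ->
  xi_u1P Rr L DF * enorm (px z1 - px z2) <= enorm (px (F z1) - px (F z2)).
Proof.
move=> hc hu hs Rr0 RrS RL L1 hL hF _ D1 D2 [k hk].
have R1 : Rr <= 1.
  move: RrS; lra.
have L0 : 0 < L.
  move: RL; lra.
have Li0 : 0 <= L^-1 by rewrite invr_ge0 ltW.
have [M HM] := DF_bounded Rr0 R1 hL hF.
set z1' : lpoint R c u s := shift z1 k.
have Dz1' : Dom Rr z1' by [].
set zm : lpoint R c u s := (plam z1 + intv R k, px z2, py z1).
have Dzm : Dom Rr zm by case: D1 => _ ?; case: D2.
have [EF1 _] := hL z1 D1 k.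
have blk : forall w, Dom Rr w ->
   opnorm (d_ly_fx (DF w)) <= M /\ forall i j, `|dxx (DF w) i j| <= M.
  move=> w Dw; have := HM w Dw; rewrite d9size_split => H.
  have := mxl1_ge0 (dll (DF w)); have := mxl1_ge0 (dlx (DF w)); have := mxl1_ge0 (dly (DF w)).
  have := mxl1_ge0 (dxl (DF w)); have := mxl1_ge0 (dxx (DF w)); have := mxl1_ge0 (dxy (DF w)).
  have := mxl1_ge0 (dyl (DF w)); have := mxl1_ge0 (dyx (DF w)); have := mxl1_ge0 (dyy (DF w)).
  move=> *; split.
    apply: (le_trans (opnorm_le _)); rewrite /d_ly_fx mxl1_row; lra.
  move=> i j; apply: (le_trans (mxl1_entry _ i j)); lra.
set S := sup_D Rr (fun z => opnorm (d_ly_fx (DF z))).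
have S_ub : forall w, Dom Rr w -> opnorm (d_ly_fx (DF w)) <= S.
  move=> w Dw; apply: ub_le_sup; last by exists w.
  by exists M => r [w' Dw' ->]; case: (blk w' Dw').
have S0 : 0 <= S by apply: le_trans (S_ub _ D2); apply: opnorm_ge0.
set g1 := px (F zm) - px (F z2).
have hseg1 : forall t, 0 <= t <= 1 -> Dom Rr (seg z2 (psub zm z2) t).
  by move=> t ht; apply: Dom_seg.
have [tau tau01 Etau] := mvt_seg hF g1 hseg1.
rewrite seg1 seg0 -dotBr -enorm_sqr_dot in Etau.
set col := col_mx (plam z1 + intv R k - plam z2) (py z1 - py z2).
have Eg : px (dapply (DF (seg z2 (psub zm z2) tau)) (psub zm z2)) =
          d_ly_fx (DF (seg z2 (psub zm z2) tau)) *m col.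
  by rewrite /dapply /d_ly_fx /col /px /psub /= mul_row_col subrr mulmx0 addr0.
rewrite Eg in Etau.
have B1 : enorm g1 <= S * enorm col.
  have Hd := dot_le g1 (d_ly_fx (DF (seg z2 (psub zm z2) tau)) *m col).
  have Ho := opnorm_mul (d_ly_fx (DF (seg z2 (psub zm z2) tau))) col.
  have Hs := S_ub _ (hseg1 tau (ltac:(by case/andP: tau01 => ? ?; rewrite !ltW))).
  have g0 := enorm_ge0 g1; have c0 := enorm_ge0 col.
  have o0 := opnorm_ge0 (d_ly_fx (DF (seg z2 (psub zm z2) tau))).
  move: Hd; rewrite -Etau ger0_norm ?sqr_ge0 // => Hd.
  have [gz|gp] := eqVneq (enorm g1) 0; first by rewrite gz mulr_ge0.
  have gpos : 0 < enorm g1 by rewrite lt_def gp g0.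
  rewrite expr2 in Hd; have := ler_pM2l gpos; move=> E; rewrite -E.
  apply: (le_trans Hd); rewrite ler_pM2l //; apply: (le_trans Ho).
  by apply: ler_wpM2r.
have B2 : enorm g1 <= L^-1 * S * enorm (px z1 - px z2).
  apply: (le_trans B1); apply: (le_trans (ler_wpM2l S0 hk)).
  by rewrite mulrA [S * L^-1]mulrC.
pose g2 := px (F z1') - px (F zm).
pose v := psub z1' zm.
have hseg2 : forall t, 0 <= t <= 1 -> Dom Rr (seg zm v t).
  by move=> t ht; apply: Dom_seg.
have : forall i : 'I_u, exists tau, (0 < tau < 1) /\
   g2 i ord0 = dot (delta_mx i 0) (px (dapply (DF (seg zm v tau)) v)).
  move=> i; have [t t01 Et] := mvt_seg hF (delta_mx i 0) hseg2.
  exists t; split => //; rewrite -Et seg1 seg0 -dotBr dot_delta //.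
case/choice => ta Hta.
pose A := \matrix_(i < u, j < u) dxx (DF (seg zm v (ta i))) i j.
have Pv : plam v = 0 by rewrite /v /psub /plam /= subrr.
have Yv : py v = 0 by rewrite /v /psub /py /= subrr.
have Xv : px v = px z1 - px z2 by [].
have Ed : forall d, px (dapply d v) = dxx d *m (px z1 - px z2).
  move=> d; rewrite -Xv; move: Pv Yv.
  have : forall a : lpoint R c u s, plam a = 0 -> py a = 0 -> px (dapply d a) = dxx d *m px a.
    case=> [[l x] y]; rewrite /dapply /plam /px /py /= => -> ->.
    by rewrite !mulmx0 add0r addr0.
  exact.
have EA : g2 = A *m (px z1 - px z2).
  apply/matrixP => i j; rewrite (ord1 j); have [_ ->] := Hta i.
  rewrite dot_delta Ed !mxE.
  by apply: eq_bigr => l _; rewrite /A !mxE.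
have Pl : forall t, plam (seg zm v t) = plam z1'.
  move=> t; have -> : plam (seg zm v t) = plam zm + t *: plam v by [].
  by rewrite Pv scaler0 addr0.
have Ahull : ihull (fun w => d_x_fx (DF w)) (Pset Rr z1') A.
  move=> i j; rewrite /A mxE.
  have Dp : Dom Rr (seg zm v (ta i)).
    by apply: hseg2; case: (Hta i) => /andP[? ?] _; rewrite !ltW.
  have Pp : Pset Rr z1' (seg zm v (ta i)).
    by split => //; rewrite Pl subrr enorm0 invr_ge0.
  split.
    apply: ge_inf; last by exists (seg zm v (ta i)).
    exists (- M) => r [w [Dw _] ->]; rewrite lerNl.
    have [_ H] := blk w Dw; have := H i j; rewrite /d_x_fx ler_norml.
    by move=> /andP[? ?]; lra.
  apply: ub_le_sup; last by exists (seg zm v (ta i)).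
  exists M => r [w [Dw _] ->].
  have [_ H] := blk w Dw; have := H i j; rewrite /d_x_fx ler_norml.
  by move=> /andP[? ?]; lra.
set I := inf_D Rr (fun z => mlow_set (ihull (fun w => d_x_fx (DF w)) (Pset Rr z))).
have I1 : I <= mlow A.
  apply: (le_trans _ (mlow_set_le hu Ahull)).
  apply: ge_inf; last by exists z1'.
  by exists 0 => r [w _ ->]; apply: mlow_set_ge0.
have A1 : I * enorm (px z1 - px z2) <= enorm g2.
  rewrite EA; apply: le_trans (mlow_mul _ _).
  by apply: ler_wpM2r => //; apply: enorm_ge0.
have Esum : px (F z1) - px (F z2) = g2 + g1.
  by rewrite /g2 /g1 -EF1 addrA subrK.
rewrite Esum.
have T : enorm g2 <= enorm (g2 + g1) + enorm g1.
  by rewrite -{1}(addrK g1 g2) -[_ - g1]/(_ + - g1); apply: le_trans (enorm_triangle _ _) _;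
    rewrite enormN.
rewrite /xi_u1P -/I -/S mulrBl; lra.
Qed.
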